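(* The category $\mathrm{Alg}_r(G_1)$ of reachable pointed lasso automata is complete; i.e. (as it is a preorder) every set-indexed family of reachable pointed lasso automata has a meet (product) in $\mathrm{Alg}_r(G_1)$.
   Context: $\Sigma$ is a finite alphabet, $\Sigma^{\ast+}=\Sigma^\ast\times\Sigma^+$ the lassos. A pointed lasso automaton is $(X_1,X_2,\overline{x},\delta_1,\delta_2,\delta_3)$ with disjoint $X_1,X_2$, $\overline{x}\in X_1$, $\delta_1:X_1\times\Sigma\to X_1$, $\delta_2:X_1\times\Sigma\to X_2$, $\delta_3:X_2\times\Sigma\to X_2$; extend $\delta_1,\delta_3$ to words, $\delta_\circ(x,av)=\delta_3(\delta_2(x,a),v)$ for $x\in X_1$, $\delta(x,(u,v))=\delta_\circ(\delta_1(x,u),v)$. It is reachable if every $x\in X_1$ is $\delta_1(\overline{x},w)$ for some word $w$ and every $y\in X_2$ is $\delta(\overline{x},(u,v))$ for some lasso. A morphism is a pair $h_1:X_1\to Y_1$, $h_2:X_2\to Y_2$ preserving the initial state and commuting with $\delta_1,\delta_2,\delta_3$. $\mathrm{Alg}_r(G_1)$ is the category of reachable pointed lasso automata and morphisms; there is at most one morphism between any two objects, so it is a preorder. *)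

(* Defs.v *)
From mathcomp Require Import all_boot.
Set Implicit Arguments. Unset Strict Implicit. Unset Printing Implicit Defensive.

(* Pointed lasso automata over an alphabet Sigma (a finType).
   X1, X2 are separate types, so disjointness is automatic. *)
Record lasso_aut (Sigma : finType) := LassoAut {
  X1 : Type;
  X2 : Type;
  init : X1;
  delta1 : X1 -> Sigma -> X1;
  delta2 : X1 -> Sigma -> X2;
  delta3 : X2 -> Sigma -> X2 }.

Section Lasso.
Variable Sigma : finType.

(* A lasso (u, v) with v nonempty is represented as (u, (a, v')) with v = a v'. *)
Definition lasso := (seq Sigma * (Sigma * seq Sigma))%type.

Definition delta1_star (A : lasso_aut Sigma) (x : X1 A) (w : seq Sigma) : X1 A :=
  foldl (@delta1 _ A) x w.
Definition delta3_star (A : lasso_aut Sigma) (y : X2 A) (w : seq Sigma) : X2 A :=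
  foldl (@delta3 _ A) y w.
Definition delta_circ (A : lasso_aut Sigma) (x : X1 A) (a : Sigma) (v : seq Sigma) : X2 A :=
  delta3_star (delta2 x a) v.
Definition delta_lasso (A : lasso_aut Sigma) (x : X1 A) (l : lasso) : X2 A :=
  delta_circ (delta1_star x l.1) l.2.1 l.2.2.

Definition reachable (A : lasso_aut Sigma) : Prop :=
  (forall x : X1 A, exists w : seq Sigma, delta1_star (init A) w = x) /\
  (forall y : X2 A, exists l : lasso, delta_lasso (init A) l = y).

Record morphism (A B : lasso_aut Sigma) := Morphism {
  h1 : X1 A -> X1 B;
  h2 : X2 A -> X2 B;
  h_init : h1 (init A) = init B;
  h_delta1 : forall x a, h1 (delta1 x a) = delta1 (h1 x) a;
  h_delta2 : forall x a, h2 (delta2 x a) = delta2 (h1 x) a;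
  h_delta3 : forall y a, h2 (delta3 y a) = delta3 (h2 y) a }.

(* The preorder relation of Alg_r(G_1): there is a (necessarily unique) morphism. *)
Definition hom (A B : lasso_aut Sigma) : Prop := inhabited (morphism A B).

End Lasso.

(* Main.v *)
Require Import Defs.
From mathcomp Require Import all_boot.
From Stdlib Require Import ProofIrrelevance FunctionalExtensionality ClassicalEpsilon.

Lemma mor_d1 (S : finType) (A B : lasso_aut S) (m : morphism A B) w x :
  h1 m (delta1_star x w) = delta1_star (h1 m x) w.
Proof.
elim: w x => [|a w IH] x //=. rewrite /delta1_star /= -/(delta1_star _ _) IH h_delta1 //.
Qed.

Lemma mor_d3 (S : finType) (A B : lasso_aut S) (m : morphism A B) w y :
  h2 m (delta3_star y w) = delta3_star (h2 m y) w.
Proof.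
elim: w y => [|a w IH] y //=. rewrite /delta3_star /= -/(delta3_star _ _) IH h_delta3 //.
Qed.

Lemma mor_l (S : finType) (A B : lasso_aut S) (m : morphism A B) l :
  h2 m (delta_lasso (init A) l) = delta_lasso (init B) l.
Proof.
rewrite /delta_lasso /delta_circ mor_d3 h_delta2 mor_d1 h_init //.
Qed.

Lemma d1_rcons (S : finType) (A : lasso_aut S) (x : X1 A) w a :
  delta1_star x (rcons w a) = delta1 (delta1_star x w) a.
Proof. by rewrite /delta1_star -cats1 foldl_cat. Qed.

Lemma d3_rcons (S : finType) (A : lasso_aut S) (x : X2 A) w a :
  delta3_star x (rcons w a) = delta3 (delta3_star x w) a.
Proof. by rewrite /delta3_star -cats1 foldl_cat. Qed.

Section Prod.
Variables (Sigma : finType) (I : Type) (A : I -> lasso_aut Sigma).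

Definition P1 := {f : forall i, X1 (A i) | exists w, forall i, f i = delta1_star (init (A i)) w}.
Definition P2 := {g : forall i, X2 (A i) | exists l, forall i, g i = delta_lasso (init (A i)) l}.

Definition Pinit : P1.
exists (fun i => init (A i)). by exists [::].
Defined.

Definition Pd1 (x : P1) (a : Sigma) : P1.
exists (fun i => delta1 (proj1_sig x i) a).
case: (proj2_sig x) => w Hw. exists (rcons w a) => i. by rewrite d1_rcons Hw.
Defined.

Definition Pd2 (x : P1) (a : Sigma) : P2.
exists (fun i => delta2 (proj1_sig x i) a).
case: (proj2_sig x) => w Hw. exists (w, (a, [::])) => i. by rewrite Hw.
Defined.

Definition Pd3 (y : P2) (a : Sigma) : P2.
exists (fun i => delta3 (proj1_sig y i) a).
case: (proj2_sig y) => [[u [b v]]] Hw. exists (u, (b, rcons v a)) => i.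
by rewrite Hw /delta_lasso /delta_circ /= d3_rcons.
Defined.

Definition PA : lasso_aut Sigma := LassoAut Pinit Pd1 Pd2 Pd3.

Lemma PA_d1 w : proj1_sig (delta1_star (A := PA) Pinit w) = fun i => delta1_star (init (A i)) w.
Proof.
elim/last_ind: w => [|w a IH] //. rewrite d1_rcons /= IH.
apply: functional_extensionality_dep => i. by rewrite d1_rcons.
Qed.

Lemma PA_d3 y w : proj1_sig (delta3_star (A := PA) y w) = fun i => delta3_star (proj1_sig y i) w.
Proof.
elim/last_ind: w => [|w a IH] //. rewrite d3_rcons /= IH.
apply: functional_extensionality_dep => i. by rewrite d3_rcons.
Qed.

Lemma PA_reach : reachable PA.
Proof.
split.
- move=> [f [w Hw]]. exists w. apply: eq_sig_hprop => /=.
  + move=> ? ? ?; apply: proof_irrelevance.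
  + rewrite PA_d1. apply: functional_extensionality_dep => i. by rewrite Hw.
- move=> [g [l Hl]]. exists l. apply: eq_sig_hprop => /=.
  + move=> ? ? ?; apply: proof_irrelevance.
  + rewrite /delta_lasso /delta_circ PA_d3 /= PA_d1.
    apply: functional_extensionality_dep => i. by rewrite Hl.
Qed.

Definition proj i : morphism PA (A i).
by apply: (@Morphism _ PA (A i) (fun x => proj1_sig x i) (fun y => proj1_sig y i)).
Defined.

End Prod.

Theorem mainTheorem15 (Sigma : finType) (I : Type) (A : I -> lasso_aut Sigma)
  (HA : forall i, reachable (A i)) :
  exists P : lasso_aut Sigma,
    reachable P /\ (forall i, hom P (A i)) /\
    (forall B : lasso_aut Sigma, reachable B -> (forall i, hom B (A i)) -> hom B P).
Proof.
exists (@PA Sigma I A); split; first exact: PA_reach.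
split; first by move=> i; constructor; exact: proj.
move=> B [R1 R2] HB.
pose w x := proj1_sig (constructive_indefinite_description _ (R1 x)).
have Hw x : delta1_star (init B) (w x) = x := proj2_sig (constructive_indefinite_description _ (R1 x)).
pose l y := proj1_sig (constructive_indefinite_description _ (R2 y)).
have Hl y : delta_lasso (init B) (l y) = y := proj2_sig (constructive_indefinite_description _ (R2 y)).
have E1 i x (m : morphism B (A i)) : delta1_star (init (A i)) (w x) = h1 m x.
  by rewrite -{2}(Hw x) mor_d1 h_init.
have E2 i y (m : morphism B (A i)) : delta_lasso (init (A i)) (l y) = h2 m y.
  by rewrite -{2}(Hl y) mor_l.
have sigP : forall (T : Type) (Q : T -> Prop) (a b : sig Q), proj1_sig a = proj1_sig b -> a = b.
  move=> T Q a b; apply: eq_sig_hprop => ? ? ?; apply: proof_irrelevance.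
constructor.
unshelve eapply (@Morphism _ B (@PA Sigma I A)).
- move=> x. exists (fun i => delta1_star (init (A i)) (w x)). by exists (w x).
- move=> y. exists (fun i => delta_lasso (init (A i)) (l y)). by exists (l y).
- apply: sigP => /=; apply: functional_extensionality_dep => i.
  case: (HB i) => m. by rewrite (E1 i _ m) h_init.
- move=> x a; apply: sigP => /=; apply: functional_extensionality_dep => i.
  case: (HB i) => m. by rewrite !(E1 i _ m) h_delta1.
- move=> x a; apply: sigP => /=; apply: functional_extensionality_dep => i.
  case: (HB i) => m. by rewrite (E2 i _ m) (E1 i _ m) h_delta2.
- move=> y a; apply: sigP => /=; apply: functional_extensionality_dep => i.
  case: (HB i) => m. by rewrite !(E2 i _ m) h_delta3.
Qed.
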